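(* Consider the planar system $$x_2'=\begin{cases}-y_2+x_2^2, & y_2<x_2^2,\\ 0, & y_2\ge x_2^2,\end{cases}\qquad y_2'=x_2,$$ and let $H(x_2,y_2)=\frac12 e^{-2y_2}\left(y_2-x_2^2+\frac12\right)$, $\mathcal{C}_{0,2}=\{y_2\ge x_2^2\}$. Then: (i) For initial conditions $x_2(0)=-c<0$, $y_2(0)>x_2(0)^2$, the solution reaches $(-c,c^2)$ after finite time, with $x_2'=0$, $y_2'=x_2=-c$ before that. From $(-c,c^2)$ it continues to the point $(c,c^2)$ along the level set $H(x_2,y_2)=\frac14e^{-2c^2}$. Afterwards $y_2\to\infty$ as $t_2\to\infty$ at speed $c$, while $x_2=c$ remains constant. (ii) For initial conditions $x_2(0)=c>0$, $y_2(0)>x_2(0)^2$, $y_2\to\infty$ as $t_2\to\infty$ at speed $c$, while $x_2=c$ remains constant. (iii) The set $\mathbb{R}^2\setminus\mathcal{C}_{0,2}=\{y_2<x_2^2\}$ is invariant for all solutions with $H(x_2(0),y_2(0))<0$. Each such solution stays on a level set of $H$ and satisfies $x_2\to\infty$ as $t_2\to\infty$. (iv) The set of equilibria is the half line $\{(0,y):y\ge0\}\subset\mathcal{C}_{0,2}$. (v) $\gamma_{c,2}(t_2)=\left(\frac12t_2,\frac14t_2^2-\frac12\right)$, $t_2\in\mathbb{R}$, is a solution lying in the level set $H=0$.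
   Context: This is the reduced system (at $r_2=0$, $\lambda_2=0$) of the rescaling chart of the blow-up of a canard point for the system with two-dimensional critical manifold $\{y\ge x^2\}$. ''Constant of motion of $H$'' means the solution stays in one level set of $H$. *)

(* Defs.v *)
From Stdlib Require Import Reals.
From Coquelicot Require Import Coquelicot.
Open Scope R_scope.

Definition F1 (x y : R) : R :=
  if Rlt_dec y (x ^ 2) then - y + x ^ 2 else 0.

Definition H (x y : R) : R :=
  / 2 * exp (- 2 * y) * (y - x ^ 2 + / 2).

Definition C02 (x y : R) : Prop := x ^ 2 <= y.

Definition is_sol (x y : R -> R) (T : Rbar) : Prop :=
  forall t, 0 <= t -> Rbar_lt (Finite t) T ->
    is_derive x t (F1 (x t) (y t)) /\ is_derive y t (x t).

Definition is_sol_R (x y : R -> R) : Prop :=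
  forall t, is_derive x t (F1 (x t) (y t)) /\ is_derive y t (x t).

Definition maximal_sol (x y : R -> R) (T : Rbar) : Prop :=
  is_sol x y T /\
  forall (T' : Rbar) (x' y' : R -> R),
    Rbar_lt T T' -> is_sol x' y' T' ->
    ~ (forall t, 0 <= t -> Rbar_lt (Finite t) T -> x' t = x t /\ y' t = y t).

Definition tends_to_pinfty_at (f : R -> R) (T : Rbar) : Prop :=
  forall M : R, exists t0 : R, 0 <= t0 /\ Rbar_lt (Finite t0) T /\
    forall t, t0 <= t -> Rbar_lt (Finite t) T -> M < f t.

(* Main.v *)
Require Import Defs.
From Stdlib Require Import Reals Lra Psatz ClassicalEpsilon Classical Ranalysis5.
From Coquelicot Require Import Coquelicot.
Open Scope R_scope.

Lemma is_derive_eq (f : R -> R) t l l' : is_derive f t l -> l = l' -> is_derive f t l'.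
Proof. intros H1 ->; exact H1. Qed.

Lemma H_derive (x y : R -> R) (t dx dy : R) :
  is_derive x t dx -> is_derive y t dy ->
  is_derive (fun s => H (x s) (y s)) t
    (/2 * exp (-2 * y t) * (-2 * dy * (y t - (x t)^2 + /2) + dy - 2 * x t * dx)).
Proof.
  intros Hx Hy. unfold H.
  assert (E1 : is_derive (fun s => exp (-2 * y s)) t (-2 * dy * exp (-2 * y t))).
  { eapply is_derive_ext. 2: { eapply (is_derive_comp exp (fun s => -2 * y s)).
      apply is_derive_Reals, derivable_pt_lim_exp.
      apply (is_derive_scal y). exact Hy. }
    intros; reflexivity. }
  assert (E2 : is_derive (fun s => y s - x s ^ 2 + /2) t (dy - 2 * x t * dx)).
  { eapply is_derive_eq.
    apply (@is_derive_plus R_AbsRing R_NormedModule (fun s => y s - x s ^ 2) (fun _ => /2)).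
    apply (@is_derive_minus R_AbsRing R_NormedModule y (fun s => x s ^ 2)). exact Hy.
    apply (is_derive_pow x 2). exact Hx. apply is_derive_const.
    simpl. unfold plus, minus, opp, zero, scal, mult; simpl. unfold mult, plus, opp; simpl. ring. }
  eapply is_derive_eq.
  apply (is_derive_mult (fun s => /2 * exp (-2 * y s)) (fun s => y s - x s ^ 2 + /2)).
  apply (is_derive_scal (fun s => exp (-2 * y s))). exact E1. exact E2.
  intros; apply Rmult_comm.
  unfold plus, scal, mult; simpl. unfold mult; simpl. ring.
Qed.

Lemma deriv_contpt (f : R -> R) (t l : R) : is_derive f t l -> continuity_pt f t.
Proof.
  intros Hd. apply continuity_pt_filterlim. apply (ex_derive_continuous f t).
  exists l; exact Hd.
Qed.

Lemma contpt_eps (f : R -> R) t : continuity_pt f t ->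
  forall e, 0 < e -> exists d, 0 < d /\ forall s, Rabs (s - t) < d -> Rabs (f s - f t) < e.
Proof.
  intros Hc e He. destruct (Hc e He) as [d [Hd Hd']]. exists d; split; [lra|].
  intros s Hs. destruct (Req_dec s t) as [->|Hne].
  - unfold Rminus; rewrite Rplus_opp_r, Rabs_R0; lra.
  - apply (Hd' s). split. split. exact I. auto. exact Hs.
Qed.

Lemma deriv_eps (f : R -> R) (t l : R) : is_derive f t l ->
  forall e, 0 < e -> exists d, 0 < d /\ forall s, Rabs (s - t) < d -> Rabs (f s - f t) < e.
Proof. intros Hd; apply contpt_eps; eapply deriv_contpt; eauto. Qed.

Lemma mvt (f df : R -> R) a b : a <= b ->
  (forall t, a <= t <= b -> is_derive f t (df t)) ->
  exists c, a <= c <= b /\ f b - f a = df c * (b - a).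
Proof.
  intros Hab Hd.
  destruct (MVT_gen f a b df) as [c [Hc Heq]].
  - intros t Ht. rewrite Rmin_left in Ht by lra. rewrite Rmax_right in Ht by lra.
    apply Hd; lra.
  - intros t Ht. rewrite Rmin_left in Ht by lra. rewrite Rmax_right in Ht by lra.
    eapply deriv_contpt. apply Hd; lra.
  - rewrite Rmin_left in Hc by lra. rewrite Rmax_right in Hc by lra.
    exists c; split; auto.
Qed.

Lemma deriv_ge (f df : R -> R) a b m : a <= b ->
  (forall t, a <= t <= b -> is_derive f t (df t) /\ m <= df t) ->
  m * (b - a) <= f b - f a.
Proof.
  intros Hab Hd. destruct (mvt f df a b Hab) as [c [Hc ->]].
  intros t Ht; apply Hd; auto.
  apply Rmult_le_compat_r. lra. apply Hd; auto.
Qed.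

Lemma deriv_le (f df : R -> R) a b m : a <= b ->
  (forall t, a <= t <= b -> is_derive f t (df t) /\ df t <= m) ->
  f b - f a <= m * (b - a).
Proof.
  intros Hab Hd. destruct (mvt f df a b Hab) as [c [Hc ->]].
  intros t Ht; apply Hd; auto.
  apply Rmult_le_compat_r. lra. apply Hd; auto.
Qed.

Lemma deriv_zero (f df : R -> R) a b : a <= b ->
  (forall t, a <= t <= b -> is_derive f t (df t) /\ df t = 0) ->
  f b = f a.
Proof.
  intros Hab Hd.
  assert (H1 := deriv_le f df a b 0 Hab ltac:(intros t Ht; destruct (Hd t Ht); split; auto; lra)).
  assert (H2 := deriv_ge f df a b 0 Hab ltac:(intros t Ht; destruct (Hd t Ht); split; auto; lra)).
  lra.
Qed.

Lemma real_ind (a : R) (b : Rbar) (Q : R -> Prop) :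
  (forall t, a <= t -> Rbar_lt t b -> (forall s, a <= s < t -> Q s) -> Q t) ->
  (forall t, a <= t -> Rbar_lt t b -> (forall s, a <= s <= t -> Q s) ->
     exists d, 0 < d /\ forall s, t < s < t + d -> Q s) ->
  forall t, a <= t -> Rbar_lt t b -> Q t.
Proof.
  intros H1 H2 t0 Ha Hb. apply NNPP; intro Hn.
  set (E := fun u => a <= u <= t0 /\ forall s, a <= s < u -> Q s).
  destruct (completeness E) as [sg [Hub Hlub]].
  - exists t0. intros u [Hu _]. lra.
  - exists a. split. lra. intros s Hs; lra.
  assert (Hasg : a <= sg) by (apply Hub; split; [lra| intros s Hs; lra]).
  assert (Hsgt : sg <= t0) by (apply Hlub; intros u [Hu _]; lra).
  assert (A : forall s, a <= s < sg -> Q s).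
  { intros s Hs. apply NNPP; intro HQ.
    assert (Hs' : is_upper_bound E s).
    { intros u [Hu Hu']. destruct (Rle_dec u s) as [|Hlt]; auto.
      exfalso; apply HQ, Hu'; lra. }
    specialize (Hlub s Hs'). lra. }
  assert (Hsgb : Rbar_lt sg b).
  { eapply Rbar_le_lt_trans; [|exact Hb]. simpl; lra. }
  assert (Qsg : Q sg) by (apply H1; auto).
  destruct (H2 sg Hasg Hsgb) as [d [Hd Hd']].
  { intros s Hs. destruct (Req_dec s sg) as [->|]; auto. apply A; lra. }
  destruct (Req_dec sg t0) as [<-|Hne]; [contradiction|].
  set (u := Rmin (sg + d/2) t0).
  assert (Eu : E u).
  { split. unfold u; split. apply Rmin_glb; lra. apply Rmin_r.
    intros s Hs. destruct (Rlt_le_dec s sg). apply A; lra.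
    destruct (Req_dec s sg) as [->|]; auto. apply Hd'. split. lra.
    assert (s < u) by lra. assert (u <= sg + d/2) by apply Rmin_l. lra. }
  assert (u <= sg) by (apply Hub; auto).
  unfold u in H. unfold Rmin in H. destruct (Rle_dec (sg + d/2) t0); lra.
Qed.

Lemma closed_le (f : R -> R) a t v : continuity_pt f t -> a < t ->
  (forall s, a <= s < t -> f s <= v) -> f t <= v.
Proof.
  intros Hc Hat Hs. apply Rnot_lt_le; intro Hlt.
  destruct (contpt_eps f t Hc (f t - v)) as [d [Hd Hd']]. lra.
  set (s := Rmax a (t - d/2)).
  assert (a <= s) by apply Rmax_l. assert (t - d/2 <= s) by apply Rmax_r.
  assert (s < t) by (unfold s; apply Rmax_lub_lt; lra).
  specialize (Hd' s ltac:(apply Rabs_def1; lra)). specialize (Hs s ltac:(lra)).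
  apply Rabs_def2 in Hd'. lra.
Qed.

Lemma closed_eq (f : R -> R) a t v : continuity_pt f t -> a < t ->
  (forall s, a <= s < t -> f s = v) -> f t = v.
Proof.
  intros Hc Hat Hs. apply Rle_antisym.
  - apply (closed_le f a); auto. intros s Hs'; rewrite Hs; auto; lra.
  - assert (- f t <= - v); [|lra].
    apply (closed_le (fun s => - f s) a); auto. apply continuity_pt_opp; auto.
    intros s Hs'; rewrite Hs; auto; lra.
Qed.

Lemma open_lt (f : R -> R) t v : continuity_pt f t -> f t < v ->
  exists d, 0 < d /\ forall s, Rabs (s - t) < d -> f s < v.
Proof.
  intros Hc Hlt. destruct (contpt_eps f t Hc (v - f t)) as [d [Hd Hd']]. lra.
  exists d; split; auto. intros s Hs. specialize (Hd' s Hs). apply Rabs_def2 in Hd'. lra.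
Qed.

Lemma exp_lin_derive (a s : R) : is_derive (fun s => exp (a * s)) s (a * exp (a * s)).
Proof.
  eapply is_derive_eq. eapply (is_derive_comp exp (fun s => a * s)).
  apply is_derive_Reals, derivable_pt_lim_exp.
  apply (is_derive_scal (fun s => s)). apply is_derive_id.
  unfold scal, one, mult; simpl; unfold mult; simpl; ring.
Qed.

Lemma gronwall0 (g dg : R -> R) t0 t1 K : t0 <= t1 ->
  (forall u, t0 <= u <= t1 -> is_derive g u (dg u) /\ dg u <= K * g u) ->
  g t0 = 0 -> forall u, t0 <= u <= t1 -> g u <= 0.
Proof.
  intros H01 Hd Hg0 u Hu.
  set (G := fun s => g s * exp (- K * s)).
  assert (HG : G u - G t0 <= 0 * (u - t0)).
  { apply (deriv_le G (fun s => dg s * exp (-K * s) + g s * (-K * exp (-K * s)))). lra.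
    intros s Hs. destruct (Hd s ltac:(lra)) as [Hds Hle]. split.
    - unfold G. apply (is_derive_mult g (fun s => exp (-K * s))). exact Hds.
      apply exp_lin_derive. intros; apply Rmult_comm.
    - assert (0 < exp (-K * s)) by apply exp_pos.
      assert (dg s * exp (-K*s) <= K * g s * exp (-K*s)) by (apply Rmult_le_compat_r; lra).
      unfold one, mult; simpl; nra. }
  unfold G in HG. rewrite Hg0 in HG. assert (0 < exp (-K*u)) by apply exp_pos. nra.
Qed.

Definition HD (x y : R) : R :=
  / 2 * exp (- 2 * y) * (- 2 * x * (y - x ^ 2 + / 2) + x - 2 * x * F1 x y).

Lemma F1_ge0 x y : 0 <= F1 x y.
Proof. unfold F1; destruct (Rlt_dec y (x^2)); lra. Qed.

Lemma F1_in x y : y < x^2 -> F1 x y = x^2 - y.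
Proof. unfold F1; destruct (Rlt_dec y (x^2)); lra. Qed.

Lemma F1_out x y : x^2 <= y -> F1 x y = 0.
Proof. unfold F1; destruct (Rlt_dec y (x^2)); lra. Qed.

Lemma HD_zero x y : y <= x^2 -> HD x y = 0.
Proof.
  intros Hle. unfold HD. destruct (Rlt_le_dec y (x^2)).
  - rewrite F1_in by auto. field.
  - rewrite F1_out by lra. replace y with (x^2) by lra. field.
Qed.

Lemma Rbar_lt_le_trans' (u t : R) (T : Rbar) : u <= t -> Rbar_lt t T -> Rbar_lt u T.
Proof. intros H1 H2. eapply Rbar_le_lt_trans; [|exact H2]. simpl; lra. Qed.

Lemma window (t : R) (T : Rbar) : Rbar_lt t T -> exists d, 0 < d /\ forall s, s < t + d -> Rbar_lt s T.
Proof.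
  destruct T as [b| |]; simpl; intros Hlt.
  - exists (b - t); split; [lra|]. intros s Hs; lra.
  - exists 1; split; [lra|]. intros; exact I.
  - contradiction.
Qed.


Lemma dx (x y : R -> R) (T : Rbar) (Hsol : is_sol x y T) t : 0 <= t -> Rbar_lt t T -> is_derive x t (F1 (x t) (y t)).
Proof. intros; apply Hsol; auto. Qed.
Lemma dy (x y : R -> R) (T : Rbar) (Hsol : is_sol x y T) t : 0 <= t -> Rbar_lt t T -> is_derive y t (x t).
Proof. intros; apply Hsol; auto. Qed.

Lemma dQ (x y : R -> R) (T : Rbar) (Hsol : is_sol x y T) t : 0 <= t -> Rbar_lt t T ->
  is_derive (fun s => y s - x s ^ 2) t (x t - 2 * x t * F1 (x t) (y t)).
Proof.
  intros H0 H1. eapply is_derive_eq.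
  apply (@is_derive_minus R_AbsRing R_NormedModule y (fun s => x s ^ 2)). apply (dy x y T Hsol); auto.
  apply (is_derive_pow x 2). apply (dx x y T Hsol); auto.
  simpl. unfold minus, plus, opp, mult; simpl. unfold mult, plus, opp; simpl. ring.
Qed.

Lemma dHs (x y : R -> R) (T : Rbar) (Hsol : is_sol x y T) t : 0 <= t -> Rbar_lt t T ->
  is_derive (fun s => H (x s) (y s)) t (HD (x t) (y t)).
Proof.
  intros H0 H1. eapply is_derive_eq. apply H_derive; [apply (dx x y T Hsol)|apply (dy x y T Hsol)]; auto.
  unfold HD; reflexivity.
Qed.

Lemma x_mono (x y : R -> R) (T : Rbar) (Hsol : is_sol x y T) s t : 0 <= s <= t -> Rbar_lt t T -> x s <= x t.
Proof.
  intros Hs Ht.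
  assert (0 * (t - s) <= x t - x s); [|lra].
  apply (deriv_ge x (fun u => F1 (x u) (y u))). lra.
  intros u Hu. split. apply (dx x y T Hsol). lra. eapply Rbar_lt_le_trans'; [|exact Ht]; lra.
  apply F1_ge0.
Qed.

Lemma contx (x y : R -> R) (T : Rbar) (Hsol : is_sol x y T) t : 0 <= t -> Rbar_lt t T -> continuity_pt x t.
Proof. intros; eapply deriv_contpt; apply (dx x y T Hsol); auto. Qed.
Lemma conty (x y : R -> R) (T : Rbar) (Hsol : is_sol x y T) t : 0 <= t -> Rbar_lt t T -> continuity_pt y t.
Proof. intros; eapply deriv_contpt; apply (dy x y T Hsol); auto. Qed.
Lemma contQ (x y : R -> R) (T : Rbar) (Hsol : is_sol x y T) t : 0 <= t -> Rbar_lt t T -> continuity_pt (fun s => y s - x s ^ 2) t.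
Proof. intros; eapply deriv_contpt; apply (dQ x y T Hsol); auto. Qed.
Lemma contH (x y : R -> R) (T : Rbar) (Hsol : is_sol x y T) t : 0 <= t -> Rbar_lt t T -> continuity_pt (fun s => H (x s) (y s)) t.
Proof. intros; eapply deriv_contpt; apply (dHs x y T Hsol); auto. Qed.

Lemma H_const (x y : R -> R) (T : Rbar) (Hsol : is_sol x y T) a b : 0 <= a <= b -> Rbar_lt b T ->
  (forall u, a <= u <= b -> y u <= x u ^ 2) -> H (x b) (y b) = H (x a) (y a).
Proof.
  intros Hab Hb Hin.
  apply (deriv_zero (fun s => H (x s) (y s)) (fun s => HD (x s) (y s))). lra.
  intros u Hu. split. apply (dHs x y T Hsol). lra. eapply Rbar_lt_le_trans'; [|exact Hb]; lra.
  apply HD_zero, Hin; auto.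
Qed.

Lemma local_const_H (x y : R -> R) (T : Rbar) (Hsol : is_sol x y T) t : 0 <= t -> Rbar_lt t T -> y t < x t ^ 2 ->
  exists d, 0 < d /\ forall s, t <= s < t + d ->
    Rbar_lt s T /\ y s < x s ^ 2 /\ H (x s) (y s) = H (x t) (y t).
Proof.
  intros H0 Ht Hlt.
  destruct (open_lt (fun s => y s - x s ^ 2) t 0) as [d1 [Hd1 Hd1']].
  apply (contQ x y T Hsol); auto. lra.
  destruct (window t T Ht) as [d2 [Hd2 Hd2']].
  exists (Rmin d1 d2). split. apply Rmin_glb_lt; auto.
  assert (Rmin d1 d2 <= d1) by apply Rmin_l. assert (Rmin d1 d2 <= d2) by apply Rmin_r.
  intros s Hs. split. apply Hd2'; lra. split.
  specialize (Hd1' s ltac:(apply Rabs_def1; lra)). simpl in Hd1'; lra.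
  apply (H_const x y T Hsol). lra. apply Hd2'; lra.
  intros u Hu. specialize (Hd1' u ltac:(apply Rabs_def1; lra)). simpl in Hd1'; lra.
Qed.



Lemma lin_f (f df : R -> R) s t c : s <= t ->
  (forall u, s <= u <= t -> is_derive f u (df u) /\ df u = c) -> f t = f s + c * (t - s).
Proof.
  intros Hst Hd.
  assert (H1 := deriv_le f df s t c Hst ltac:(intros u Hu; destruct (Hd u Hu); split; auto; lra)).
  assert (H2 := deriv_ge f df s t c Hst ltac:(intros u Hu; destruct (Hd u Hu); split; auto; lra)).
  lra.
Qed.

Lemma L_right x y c s : 0 < c -> is_sol x y p_infty -> 0 <= s -> x s = c -> c^2 <= y s ->
  forall t, s <= t -> x t = c /\ y t = y s + c * (t - s).
Proof.
  intros Hc Hsol Hs Hxs Hys.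
  assert (Ly : forall t, s <= t -> (forall u, s <= u <= t -> x u = c) -> y t = y s + c * (t - s)).
  { intros t Hst Hu. apply (lin_f y x); auto. intros u Hu'. split.
    apply (dy x y p_infty Hsol); [lra|exact I]. apply Hu; auto. }
  assert (Hx : forall t, s <= t -> x t = c).
  { intros t0 Ht0. apply (real_ind s p_infty (fun t => x t = c)); auto; [| |exact I].
    - intros t Hst _ HQ. destruct (Req_dec t s) as [->|]; auto.
      apply (closed_eq x s t c); auto. apply (contx x y p_infty Hsol); [lra|exact I]. lra.
    - intros t Hst _ HQ.
      assert (Hyt : y t = y s + c * (t - s)) by (apply Ly; auto).
      destruct (deriv_eps x t _ (dx x y p_infty Hsol t ltac:(lra) I) 1 ltac:(lra)) as [d1 [Hd1 Hd1']].
      exists (d1 / 2). split. lra. intros u Hu.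
      assert (Hle : x u - c <= 0).
      { apply (gronwall0 (fun w => x w - c) (fun w => F1 (x w) (y w)) t (t + d1/2) (2*c+1)).
        lra. 2: { rewrite (HQ t); lra. } 2: lra.
        intros w Hw. split.
        - eapply is_derive_eq. apply (@is_derive_minus R_AbsRing R_NormedModule x (fun _ => c)).
          apply (dx x y p_infty Hsol); [lra|exact I]. apply is_derive_const.
          unfold minus, plus, opp, zero; simpl. ring.
        - assert (Hxw : c <= x w).
          { rewrite <- Hxs. apply (x_mono x y p_infty Hsol); [lra|exact I]. }
          assert (Hxw2 : x w < c + 1).
          { specialize (Hd1' w ltac:(apply Rabs_def1; lra)). apply Rabs_def2 in Hd1'.
            rewrite (HQ t) in Hd1' by lra. lra. }
          assert (Hyw : y t <= y w).
          { assert (0 * (w - t) <= y w - y t); [|lra].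
            apply (deriv_ge y x). lra. intros v Hv. split.
            apply (dy x y p_infty Hsol); [lra|exact I].
            assert (c <= x v); [|lra]. rewrite <- Hxs.
            apply (x_mono x y p_infty Hsol); [lra|exact I]. }
          assert (c ^ 2 <= y w) by nra.
          destruct (Rlt_le_dec (y w) (x w ^ 2)).
          + rewrite F1_in by auto. nra.
          + rewrite F1_out by auto. nra. }
      assert (c <= x u); [|lra]. rewrite <- Hxs.
      apply (x_mono x y p_infty Hsol); [lra|exact I]. }
  intros t Ht. split. apply Hx; auto. apply Ly; auto. intros u Hu; apply Hx; lra.
Qed.

Lemma lim_lin (y : R -> R) (A c t0 : R) : 0 < c ->
  (forall t, t0 <= t -> y t = A + c * (t - t0)) -> is_lim y p_infty p_infty.
Proof.
  intros Hc Hy. unfold is_lim, filterlim, filter_le, filtermap. intros P [M HM].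
  exists (Rmax t0 (t0 + (M + 1 - A) / c)). intros t Ht.
  apply HM. assert (t0 <= t) by (assert (H0 := Rmax_l t0 (t0 + (M + 1 - A) / c)); lra).
  assert (t0 + (M + 1 - A)/c <= t) by (assert (H0 := Rmax_r t0 (t0 + (M + 1 - A) / c)); lra).
  rewrite Hy by auto.
  assert (Hm : c * ((M + 1 - A)/c) <= c * (t - t0)) by (apply Rmult_le_compat_l; lra).
  replace (c * ((M + 1 - A)/c)) with (M + 1 - A) in Hm by (field; apply Rgt_not_eq; exact Hc). lra.
Qed.

Lemma lev (a b k : R) : H a b = / 4 * exp (-2 * k) -> b - a^2 + /2 = /2 * exp (2 * (b - k)).
Proof.
  unfold H. intros Heq.
  assert (E : exp (-2 * k) = exp (-2 * b) * exp (2 * (b - k))) by (rewrite <- exp_plus; f_equal; ring).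
  rewrite E in Heq. assert (Hp := exp_pos (-2 * b)).
  apply (Rmult_eq_reg_l (/2 * exp (-2 * b))). rewrite Heq. field.
  apply Rgt_not_eq. apply Rmult_lt_0_compat; lra.
Qed.

Lemma u_zero (u : R) : u + /2 = /2 * exp (2 * u) -> u = 0.
Proof.
  intros Heq. destruct (Req_dec u 0) as [|Hne]; auto.
  assert (Hl := exp_ineq1 (2 * u) ltac:(lra)). lra.
Qed.

Lemma u_nonpos (q u : R) : q + /2 = /2 * exp (2 * u) -> q <= 0 -> u <= 0.
Proof.
  intros Heq Hq. apply Rnot_lt_le; intro Hu.
  assert (Hl := exp_increasing 0 (2 * u) ltac:(lra)). rewrite exp_0 in Hl. lra.
Qed.

Lemma exp_le1 (u : R) : u <= 0 -> exp u <= 1.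
Proof.
  intros Hu. destruct (Req_dec u 0) as [->|]. rewrite exp_0; lra.
  assert (Hl := exp_increasing u 0 ltac:(lra)). rewrite exp_0 in Hl. lra.
Qed.

Lemma part_i (c : R) (x y : R -> R) : 0 < c ->
     is_sol x y p_infty -> x 0 = - c -> (x 0) ^ 2 < y 0 ->
     exists t1 t2 : R, 0 < t1 /\ t1 < t2 /\
       (forall t, 0 <= t <= t1 -> x t = - c /\ y t = y 0 - c * t) /\
       x t1 = - c /\ y t1 = c ^ 2 /\
       (forall t, t1 <= t <= t2 -> H (x t) (y t) = / 4 * exp (- 2 * c ^ 2)) /\
       x t2 = c /\ y t2 = c ^ 2 /\
       (forall t, t2 <= t -> x t = c /\ y t = c ^ 2 + c * (t - t2)) /\
       is_lim y p_infty p_infty.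
Proof.
  intros Hc Hsol Hx0 Hy0.
  rewrite Hx0 in Hy0. replace ((-c)^2) with (c^2) in Hy0 by ring.
  assert (DX : forall t, 0 <= t -> is_derive x t (F1 (x t) (y t))) by (intros; apply (dx x y p_infty Hsol); auto; exact I).
  assert (DY : forall t, 0 <= t -> is_derive y t (x t)) by (intros; apply (dy x y p_infty Hsol); auto; exact I).
  assert (MONO : forall s t, 0 <= s <= t -> x s <= x t) by (intros; apply (x_mono x y p_infty Hsol); auto; exact I).
  assert (CX : forall t, 0 <= t -> continuity_pt x t) by (intros; apply (contx x y p_infty Hsol); auto; exact I).
  assert (CQ : forall t, 0 <= t -> continuity_pt (fun s => y s - x s ^ 2) t) by (intros; apply (contQ x y p_infty Hsol); auto; exact I).
  assert (CH : forall t, 0 <= t -> continuity_pt (fun s => H (x s) (y s)) t) by (intros; apply (contH x y p_infty Hsol); auto; exact I).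
  set (t1 := (y 0 - c^2) / c).
  assert (Ht1 : 0 < t1) by (unfold t1; apply Rdiv_lt_0_compat; lra).
  assert (Hct1 : c * t1 = y 0 - c^2) by (unfold t1; field; lra).
  assert (P1 : forall t, 0 <= t < t1 -> x t = - c).
  { intros t0 Ht0. apply (real_ind 0 (Finite t1) (fun t => x t = - c)); [| | lra | simpl; lra].
    - intros t Ht _ HQ. destruct (Req_dec t 0) as [->|]; auto.
      apply (closed_eq x 0 t); auto. lra.
    - intros t Ht Htb HQ. simpl in Htb.
      assert (Hyt : y t = y 0 + (- c) * (t - 0)).
      { apply (lin_f y x); auto. intros u Hu; split. apply DY; lra. apply HQ; lra. }
      assert (Hpos : x t ^ 2 - y t < 0).
      { rewrite HQ by lra. rewrite Hyt. assert (c * t < c * t1) by (apply Rmult_lt_compat_l; lra). nra. }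
      destruct (open_lt (fun s => - (y s - x s ^ 2)) t 0) as [d1 [Hd1 Hd1']].
      apply continuity_pt_opp. apply CQ; lra. lra.
      exists d1. split; auto. intros s Hs.
      rewrite <- (HQ t) by lra.
      apply (deriv_zero x (fun u => F1 (x u) (y u))). lra.
      intros u Hu. split. apply DX; lra. apply F1_out.
      specialize (Hd1' u ltac:(apply Rabs_def1; lra)). simpl in Hd1'. lra. }
  assert (Px1 : x t1 = - c) by (apply (closed_eq x 0 t1); [apply CX; lra|lra|intros; apply P1; lra]).
  assert (P1' : forall t, 0 <= t <= t1 -> x t = - c).
  { intros t Ht. destruct (Req_dec t t1) as [->|]; auto. apply P1; lra. }
  assert (Py1 : forall t, 0 <= t <= t1 -> y t = y 0 - c * t).
  { intros t Ht. replace (y 0 - c * t) with (y 0 + (-c) * (t - 0)) by ring.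
    apply (lin_f y x). lra. intros u Hu; split. apply DY; lra. apply P1'; lra. }
  assert (Yt1 : y t1 = c ^ 2) by (rewrite Py1 by lra; lra).
  set (h := / 4 * exp (- 2 * c ^ 2)).
  assert (Ht1h : H (x t1) (y t1) = h).
  { unfold H, h. rewrite Px1, Yt1. field. }
  assert (P2 : forall t, t1 <= t -> x t < c -> H (x t) (y t) = h /\ y t <= x t ^ 2).
  { intros t0 Ht0. apply (real_ind t1 p_infty (fun t => x t < c -> H (x t) (y t) = h /\ y t <= x t ^ 2)); [| | lra | exact I].
    - intros t Ht _ HQ Hxt. destruct (Req_dec t t1) as [->|Hne].
      + split; auto. rewrite Px1, Yt1. nra.
      + assert (HQ' : forall s, t1 <= s < t -> H (x s) (y s) = h /\ y s <= x s ^ 2).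
        { intros s Hs. apply HQ; auto. assert (x s <= x t) by (apply MONO; lra). lra. }
        split.
        * apply (closed_eq (fun s => H (x s) (y s)) t1 t); auto. apply CH; lra. lra.
          intros s Hs; apply HQ'; auto.
        * assert (y t - x t ^ 2 <= 0); [|lra].
          apply (closed_le (fun s => y s - x s ^ 2) t1 t); auto. apply CQ; lra. lra.
          intros s Hs. destruct (HQ' s Hs). lra.
    - intros t Ht _ HQ. destruct (Rlt_le_dec (x t) c) as [Hxt|Hxt].
      + destruct (HQ t ltac:(lra) Hxt) as [Hh Hq].
        assert (Hl := lev (x t) (y t) (c^2) Hh).
        destruct (Rlt_le_dec (y t) (x t ^ 2)) as [Hlt|Hge].
        * destruct (local_const_H x y p_infty Hsol t ltac:(lra) I Hlt) as [d [Hd Hd']].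
          exists d; split; auto. intros s Hs _. destruct (Hd' s ltac:(lra)) as [_ [A1 A2]].
          split; [congruence|lra].
        * assert (Hyt : y t = x t ^ 2) by lra.
          assert (Hu : y t - c^2 = 0).
          { assert (He : exp (2 * (y t - c^2)) = exp 0) by (rewrite exp_0; lra).
            apply exp_inv in He. lra. }
          assert (Hxt' : x t = - c).
          { assert (Hp : (x t - c) * (x t + c) = 0) by nra.
            destruct (Rmult_integral _ _ Hp); lra. }
          assert (Htt1 : t = t1).
          { assert (Hd := deriv_le y x t1 t (-c) Ht ltac:(intros u Hu'; split; [apply DY; lra| rewrite <- Hxt'; apply MONO; lra])).
            assert (0 <= -c * (t - t1)) by lra.
            assert (c * (t - t1) <= 0) by lra.
            assert (t - t1 <= 0). { apply Rnot_lt_le; intro. assert (0 < c * (t - t1)) by (apply Rmult_lt_0_compat; lra). lra. }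
            lra. }
          subst t.
          assert (DQ := dQ x y p_infty Hsol t1 ltac:(lra) I).
          rewrite (F1_out (x t1) (y t1)) in DQ by (rewrite Px1, Yt1; nra).
          rewrite Px1 in DQ. apply is_derive_Reals in DQ.
          destruct (DQ c Hc) as [del Hdel].
          assert (Qneg : forall s, t1 < s < t1 + del -> y s - x s ^ 2 < 0).
          { intros s Hs. specialize (Hdel (s - t1) ltac:(lra) ltac:(apply Rabs_def1; lra)).
            replace (t1 + (s - t1)) with s in Hdel by ring.
            rewrite Px1, Yt1 in Hdel. apply Rabs_def2 in Hdel.
            assert (Hq0 : c^2 - (-c)^2 = 0) by ring. rewrite Hq0 in Hdel.
            assert (Hlt : (y s - x s ^ 2 - 0) / (s - t1) < 0) by lra.
            assert (Hpos : 0 < s - t1) by lra.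
            replace (y s - x s ^ 2) with (((y s - x s ^ 2 - 0) / (s - t1)) * (s - t1)) by (field; lra).
            nra. }
          exists del. split. apply cond_pos. intros s Hs _. split.
          { rewrite <- Ht1h. apply (H_const x y p_infty Hsol). lra. exact I.
            intros u Hu'. destruct (Req_dec u t1) as [->|]. rewrite Px1, Yt1; nra.
            assert (y u - x u ^ 2 < 0) by (apply Qneg; lra). lra. }
          assert (y s - x s ^ 2 < 0) by (apply Qneg; lra). lra.
      + exists 1. split. lra. intros s Hs Hxs. exfalso.
        assert (x t <= x s) by (apply MONO; lra). lra. }
  assert (Hex : exists ts, t1 <= ts /\ c <= x ts).
  { apply NNPP; intro Hn.
    assert (Hall : forall t, t1 <= t -> x t < c).
    { intros t Ht. apply Rnot_le_lt. intro Hle. apply Hn. exists t; auto. }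
    assert (F : forall t, t1 <= t ->
      y t <= c ^ 2 /\ - / 2 <= y t /\ - c <= x t /\
      F1 (x t) (y t) = / 2 - / 2 * exp (2 * (y t - c ^ 2))).
    { intros t Ht. destruct (P2 t Ht (Hall t Ht)) as [Hh Hq].
      assert (Hl := lev (x t) (y t) (c^2) Hh).
      assert (Hu := u_nonpos _ _ Hl ltac:(lra)).
      assert (HE := exp_le1 (2 * (y t - c^2)) ltac:(lra)).
      assert (HE0 := exp_pos (2 * (y t - c^2))).
      split. lra. split. nra. split. rewrite <- Px1. apply MONO; lra.
      destruct (Rlt_le_dec (y t) (x t ^ 2)). rewrite F1_in by auto. lra.
      rewrite F1_out by auto. lra. }
    set (e3 := exp (- (3 * c^2) / 2)).
    assert (He3 : e3 < 1).
    { unfold e3. assert (Hl := exp_increasing (- (3 * c^2) / 2) 0 ltac:(nra)). rewrite exp_0 in Hl. lra. }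
    set (m := / 2 - / 2 * e3).
    assert (Hm : 0 < m) by (unfold m; lra).
    assert (Fm : forall t, t1 <= t -> - (c/2) <= x t <= c / 2 -> m <= F1 (x t) (y t)).
    { intros t Ht Hxt. destruct (P2 t Ht (Hall t Ht)) as [Hh Hq].
      assert (Hl := lev (x t) (y t) (c^2) Hh).
      destruct (F t Ht) as [A1 [A2 [A3 A4]]]. rewrite A4. unfold m.
      assert (HE := exp_le1 (2 * (y t - c^2)) ltac:(lra)).
      assert (Hx2 : x t ^ 2 <= c^2 / 4) by nra.
      assert (Hu : 2 * (y t - c ^ 2) <= - (3 * c^2) / 2) by nra.
      assert (exp (2 * (y t - c ^ 2)) <= e3).
      { unfold e3. destruct (Req_dec (2 * (y t - c ^ 2)) (- (3 * c^2) / 2)) as [->|]. lra.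
        left. apply exp_increasing. lra. }
      lra. }
    set (L := (2 * c^2 + 1) / c + 1).
    assert (HL : c * L = 2 * c^2 + 1 + c) by (unfold L; field; lra).
    assert (HL0 : 0 < L) by (unfold L; assert (0 < (2 * c^2 + 1)/c) by (apply Rdiv_lt_0_compat; nra); lra).
    set (tA := t1 + L).
    destruct (Rlt_le_dec (x tA) (- (c/2))) as [HA|HA].
    - assert (Hd := deriv_le y x t1 tA (- (c/2)) ltac:(unfold tA; lra)
        ltac:(intros u Hu; split; [apply DY; lra| assert (x u <= x tA) by (apply MONO; lra); lra])).
      destruct (F tA ltac:(unfold tA; lra)) as [_ [A2 _]].
      unfold tA in Hd, A2. rewrite Yt1 in Hd. replace (t1 + L - t1) with L in Hd by ring. nra.
    - set (L' := c / m + 1). assert (HL' : m * L' = c + m) by (unfold L'; field; lra).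
      set (tB := tA + L').
      assert (HL'0 : 0 < L') by (unfold L'; assert (0 < c / m) by (apply Rdiv_lt_0_compat; lra); lra).
      destruct (Rle_lt_dec (x tB) (c/2)) as [HB|HB].
      + assert (Hd : m * (tB - tA) <= x tB - x tA).
        { apply (deriv_ge x (fun u => F1 (x u) (y u))). unfold tB; lra.
          intros u Hu. assert (t1 <= u) by (unfold tB, tA in *; lra). split.
          apply DX; lra. apply Fm. lra.
          assert (x tA <= x u) by (apply MONO; unfold tA in *; lra).
          assert (x u <= x tB) by (apply MONO; unfold tA in *; lra). lra. }
        replace (tB - tA) with L' in Hd by (unfold tB; ring). lra.
      + set (tC := tB + L).
        assert (Hd : c/2 * (tC - tB) <= y tC - y tB).
        { apply (deriv_ge y x). unfold tC; lra.
          intros u Hu. assert (t1 <= tB) by (unfold tB, tA; lra). split.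
          apply DY; lra.
          assert (x tB <= x u) by (apply MONO; lra). lra. }
        replace (tC - tB) with L in Hd by (unfold tC; ring).
        destruct (F tB ltac:(unfold tB, tA; lra)) as [_ [B2 _]].
        destruct (F tC ltac:(unfold tC, tB, tA; lra)) as [C1 _].
        nra. }
  destruct Hex as [ts [Hts Hxts]].
  set (E := fun u => t1 <= u <= ts /\ x u < c).
  destruct (completeness E) as [sg [Hub Hlub]].
  { exists ts. intros u [Hu _]. lra. }
  { exists t1. split. lra. rewrite Px1; lra. }
  assert (Hsg1 : t1 <= sg) by (apply Hub; split; [lra| rewrite Px1; lra]).
  assert (Hsgs : sg <= ts) by (apply Hlub; intros u [Hu _]; lra).
  assert (Hbelow : forall t, t1 <= t < sg -> x t < c).
  { intros t Ht. apply Rnot_le_lt; intro Hge.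
    assert (Hubt : is_upper_bound E t).
    { intros u [Hu Hxu]. apply Rnot_lt_le; intro Hlt.
      assert (x t <= x u) by (apply MONO; lra). lra. }
    specialize (Hlub t Hubt). lra. }
  assert (Hsgt1 : t1 < sg).
  { destruct (Req_dec sg t1) as [Heq|]; [|lra]. exfalso.
    destruct (open_lt x t1 c (CX t1 ltac:(lra))) as [d [Hd Hd']]. lra.
    assert (Hts1 : t1 < ts) by (destruct (Req_dec ts t1) as [->|]; lra).
    set (u := Rmin (t1 + d/2) ts).
    assert (Hu1 : t1 < u) by (unfold u; apply Rmin_glb_lt; lra).
    assert (Hu2 : u <= t1 + d/2) by apply Rmin_l.
    assert (E u). { split. split. lra. apply Rmin_r. apply Hd'. apply Rabs_def1; lra. }
    assert (u <= sg) by (apply Hub; auto). lra. }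
  assert (Hxsg_le : x sg <= c).
  { apply (closed_le x t1 sg); auto. apply CX; lra. intros s Hs; left; apply Hbelow; lra. }
  assert (Hxsg_ge : c <= x sg).
  { apply Rnot_lt_le; intro Hlt.
    assert (Hne : sg <> ts) by (intro; subst; lra).
    destruct (open_lt x sg c (CX sg ltac:(lra)) Hlt) as [d [Hd Hd']].
    set (u := Rmin (sg + d/2) ts).
    assert (Hu1 : sg < u) by (unfold u; apply Rmin_glb_lt; lra).
    assert (Hu2 : u <= sg + d/2) by apply Rmin_l.
    assert (E u). { split. split. lra. apply Rmin_r. apply Hd'. apply Rabs_def1; lra. }
    assert (u <= sg) by (apply Hub; auto). lra. }
  assert (Hxsg : x sg = c) by lra.
  assert (Hhsg : H (x sg) (y sg) = h).
  { apply (closed_eq (fun s => H (x s) (y s)) t1 sg); auto. apply CH; lra.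
    intros s Hs. apply P2; [lra| apply Hbelow; lra]. }
  assert (Hysg : y sg = c ^ 2).
  { assert (Hl := lev (x sg) (y sg) (c^2) Hhsg). rewrite Hxsg in Hl.
    assert (y sg - c^2 = 0); [|lra]. apply u_zero. lra. }
  assert (Hright := L_right x y c sg Hc Hsol ltac:(lra) Hxsg ltac:(lra)).
  rewrite Hysg in Hright.
  exists t1, sg. split; [lra|]. split; [lra|]. split.
  { intros t Ht. split; [apply P1'|apply Py1]; auto. }
  split; [auto|]. split; [auto|]. split.
  { intros t Ht. destruct (Req_dec t sg) as [->|]; auto. apply P2; [lra|]. apply Hbelow; lra. }
  split; [auto|]. split; [auto|]. split; [auto|].
  apply (lim_lin y (c^2) c sg); auto. intros t Ht; apply Hright; auto.
Qed.

Lemma inv_fun (f df : R -> R) (P : R -> Prop) :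
  (forall w, is_derive f w (df w)) -> (forall w, 0 < df w) ->
  (forall v, P v -> exists w, f w = v) ->
  (forall v, P v -> exists e, 0 < e /\ forall u, Rabs (u - v) < e -> P u) ->
  exists g, (forall v, P v -> f (g v) = v) /\ (forall v, P v -> is_derive g v (/ df (g v))).
Proof.
  intros Hd Hpos Hsurj Hopen.
  assert (Hmono : forall a b, a < b -> f a < f b).
  { intros a b Hab. destruct (mvt f df a b ltac:(lra)) as [c [Hc Heq]].
    intros; apply Hd. assert (0 < df c * (b - a)) by (apply Rmult_lt_0_compat; [apply Hpos|lra]). lra. }
  assert (Hlt_inv : forall a b, f a < f b -> a < b).
  { intros a b Hab. destruct (Rlt_le_dec a b) as [|Hba]; auto.
    destruct (Req_dec a b) as [->|]. lra. assert (f b < f a) by (apply Hmono; lra). lra. }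
  set (g := fun v => epsilon (inhabits 0) (fun w => f w = v)).
  assert (Hg : forall v, P v -> f (g v) = v).
  { intros v Hv. unfold g. apply epsilon_spec. apply Hsurj; auto. }
  exists g. split; auto.
  intros v Hv.
  assert (Hcont : continuity_pt g v).
  { intros eps Heps. destruct (Hopen v Hv) as [e [He He']].
    remember (g v) as w0 eqn:Hw0.
    assert (Ha : f (w0 - eps) < v) by (rewrite <- (Hg v Hv), <- Hw0; apply Hmono; lra).
    assert (Hb : v < f (w0 + eps)) by (rewrite <- (Hg v Hv) at 1; rewrite <- Hw0; apply Hmono; lra).
    exists (Rmin e (Rmin (v - f (w0 - eps)) (f (w0 + eps) - v))). split.
    { apply Rmin_glb_lt; auto. apply Rmin_glb_lt; lra. }
    intros u [_ Hu]. unfold R_dist in *; simpl in *. unfold R_dist in *.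
    assert (H1 := Rmin_l e (Rmin (v - f (w0 - eps)) (f (w0 + eps) - v))).
    assert (H2 := Rmin_r e (Rmin (v - f (w0 - eps)) (f (w0 + eps) - v))).
    assert (H3 := Rmin_l (v - f (w0 - eps)) (f (w0 + eps) - v)).
    assert (H4 := Rmin_r (v - f (w0 - eps)) (f (w0 + eps) - v)).
    apply Rabs_def2 in Hu. assert (Pu : P u) by (apply He'; apply Rabs_def1; lra).
    assert (Hfu := Hg u Pu).
    apply Rabs_def1.
    - assert (g u < w0 + eps); [|lra]. apply Hlt_inv. rewrite Hfu. lra.
    - assert (w0 - eps < g u); [|lra]. apply Hlt_inv. rewrite Hfu. lra. }
  destruct (Hopen v Hv) as [e [He He']].
  set (lb := v - e/2). set (ub := v + e/2).
  assert (Plu : forall u, lb <= u <= ub -> P u).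
  { intros u Hu. apply He'. unfold lb, ub in Hu. apply Rabs_def1; lra. }
  set (Prf := fun (a : R) (_ : g lb <= a <= g ub) =>
     exist (fun l => derivable_pt_lim f a l) (df a) (proj1 (is_derive_Reals f a (df a)) (Hd a))).
  assert (Prg_incr : g lb <= g v <= g ub).
  { split; left; apply Hlt_inv; rewrite Hg, Hg; auto; unfold lb, ub in *; try lra;
    apply Plu; unfold lb, ub; lra. }
  assert (Hfg : forall u, lb <= u <= ub -> comp f g u = id u).
  { intros u Hu. unfold comp, id. apply Hg, Plu; auto. }
  assert (Hne : derive_pt f (g v) (Prf (g v) Prg_incr) <> 0).
  { simpl. specialize (Hpos (g v)). lra. }
  assert (Hr := derivable_pt_lim_recip_interv f g lb ub v Prf Hcont ltac:(unfold lb, ub; lra)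
     ltac:(unfold lb, ub; lra) Prg_incr Hfg Hne).
  simpl in Hr. apply is_derive_Reals. replace (/ df (g v)) with (1 / df (g v)) by (field; specialize (Hpos (g v)); lra).
  exact Hr.
Qed.

Lemma loc_of (t e : R) (P : R -> Prop) : 0 < e -> (forall s, Rabs (s - t) < e -> P s) -> locally t P.
Proof.
  intros He HP. exists (mkposreal e He). intros s Hs. apply HP. unfold ball in Hs; simpl in Hs.
  unfold AbsRing_ball, abs, minus, plus, opp in Hs; simpl in Hs. exact Hs.
Qed.

Lemma antider (f : R -> R) a : (forall w, continuity_pt f w) ->
  forall v, is_derive (fun v => RInt f a v) v (f v).
Proof.
  intros Hc v. apply (is_derive_RInt f (fun v => RInt f a v) a v).
  exists (mkposreal 1 Rlt_0_1). intros s _. apply (@RInt_correct R_CompleteNormedModule).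
  apply (@ex_RInt_continuous R_CompleteNormedModule).
  intros z _. apply continuity_pt_filterlim. apply Hc.
  apply continuity_pt_filterlim. apply Hc.
Qed.

Lemma smono (f df : R -> R) : (forall w, is_derive f w (df w)) -> (forall w, 0 < df w) ->
  forall a b, a < b -> f a < f b.
Proof.
  intros Hd Hpos a b Hab. destruct (mvt f df a b ltac:(lra)) as [c [Hc Heq]].
  intros; apply Hd. assert (0 < df c * (b - a)) by (apply Rmult_lt_0_compat; [apply Hpos|lra]). lra.
Qed.

Lemma sinj (f df : R -> R) : (forall w, is_derive f w (df w)) -> (forall w, 0 < df w) ->
  forall a b, f a = f b -> a = b.
Proof.
  intros Hd Hpos a b Heq. destruct (Rtotal_order a b) as [Hl|[He|Hg]]; auto.
  - assert (f a < f b) by (eapply smono; eauto). lra.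
  - assert (f b < f a) by (eapply smono; eauto). lra.
Qed.

Lemma Hneg a b : H a b < 0 -> b - a ^ 2 + / 2 < 0.
Proof.
  unfold H. intros Hl. assert (Hp := exp_pos (-2 * b)).
  apply Rnot_le_lt; intro Hge. assert (0 <= / 2 * exp (-2 * b) * (b - a ^ 2 + / 2)).
  apply Rmult_le_pos; lra. lra.
Qed.

Lemma part_iii_a (T : Rbar) (x y : R -> R) :
     Rbar_lt (Finite 0) T -> is_sol x y T -> H (x 0) (y 0) < 0 ->
     (forall t, 0 <= t -> Rbar_lt (Finite t) T ->
        ~ C02 (x t) (y t) /\ H (x t) (y t) = H (x 0) (y 0)).
Proof.
  intros HT Hsol HH0.
  assert (HHc : forall t, 0 <= t -> Rbar_lt t T -> H (x t) (y t) = H (x 0) (y 0)).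
  { apply (real_ind 0 T (fun t => H (x t) (y t) = H (x 0) (y 0))).
    - intros t Ht HtT HQ. destruct (Req_dec t 0) as [->|Hne]; auto.
      apply (closed_eq (fun s => H (x s) (y s)) 0 t); auto.
      apply (contH x y T Hsol); auto. lra.
    - intros t Ht HtT HQ.
      assert (Hlt : y t < x t ^ 2).
      { assert (Hn := Hneg (x t) (y t) ltac:(rewrite HQ; lra)). lra. }
      destruct (local_const_H x y T Hsol t Ht HtT Hlt) as [d [Hd Hd']].
      exists d; split; auto. intros s Hs. destruct (Hd' s ltac:(lra)) as [_ [_ A]].
      rewrite A. apply HQ; lra. }
  intros t Ht HtT. split; [|apply HHc; auto].
  unfold C02. intro Hc. assert (Hn := Hneg (x t) (y t) ltac:(rewrite HHc; auto)). lra.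
Qed.

Lemma part_iii_b (T : Rbar) (x y : R -> R) :
     Rbar_lt (Finite 0) T -> is_sol x y T -> H (x 0) (y 0) < 0 ->
     maximal_sol x y T -> tends_to_pinfty_at x T.
Proof.
  intros HT Hsol HH0 [_ Hmax].
  assert (A := part_iii_a T x y HT Hsol HH0).
  set (H0 := H (x 0) (y 0)) in *.
  assert (F1v : forall t, 0 <= t -> Rbar_lt t T -> F1 (x t) (y t) = x t ^ 2 - y t /\ / 2 < x t ^ 2 - y t).
  { intros t Ht HtT. destruct (A t Ht HtT) as [_ Hh].
    assert (Hn := Hneg (x t) (y t) ltac:(rewrite Hh; auto)). rewrite F1_in by lra. lra. }
  destruct T as [b| |]; simpl in HT; [| |contradiction].
  2: { intros M. exists (Rmax 0 (2 * (M - x 0) + 1)). split. apply Rmax_l. split. exact I.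
       intros t Ht _. assert (H1 := Rmax_l 0 (2 * (M - x 0) + 1)). assert (H2 := Rmax_r 0 (2 * (M - x 0) + 1)).
       assert (Hd : / 2 * (t - 0) <= x t - x 0).
       { apply (deriv_ge x (fun u => F1 (x u) (y u))). lra. intros u Hu. split.
         apply (dx x y p_infty Hsol); [lra|exact I]. destruct (F1v u ltac:(lra) I). lra. }
       lra. }
  apply NNPP; intro Hn.
  apply not_all_ex_not in Hn. destruct Hn as [M HM].
  assert (Hbound : forall t, 0 <= t < b -> x t <= M).
  { intros t Ht. apply Rnot_lt_le; intro Hlt. apply HM. exists t. split. lra. split. simpl; lra.
    intros s Hs Hsb. assert (x t <= x s) by (apply (x_mono x y b Hsol); [lra|auto]). lra. }
  set (al := 2 * H0).
  assert (Hal : al < 0) by (unfold al; lra).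
  set (phi := fun w => w - al * exp (2 * w)).
  set (dphi := fun w => 1 - al * (2 * exp (2 * w))).
  assert (Dphi : forall w, is_derive phi w (dphi w)).
  { intros w. unfold phi, dphi. eapply is_derive_eq.
    apply (@is_derive_minus R_AbsRing R_NormedModule (fun w => w) (fun w => al * exp (2 * w))).
    apply is_derive_id. apply (is_derive_scal (fun w => exp (2 * w))). apply exp_lin_derive.
    unfold one, minus, plus, opp, scal, mult; simpl; unfold mult, plus, opp; simpl. ring. }
  assert (Pphi : forall w, 0 < dphi w).
  { intros w. unfold dphi. assert (Hp := exp_pos (2 * w)). nra. }
  assert (Sphi : forall v, True -> exists w, phi w = v).
  { intros v _. set (w1 := Rmin v 0 - (- al)).
    assert (Hw1 : phi w1 <= v).
    { unfold phi. assert (Hm := Rmin_l v 0). assert (Hm0 := Rmin_r v 0).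
      assert (exp (2 * w1) <= 1) by (apply exp_le1; unfold w1; lra). unfold w1 in *. nra. }
    assert (Hv : v <= phi v) by (unfold phi; assert (Hp := exp_pos (2 * v)); nra).
    destruct (IVT_gen phi w1 v v) as [w [_ Hw]].
    { intros w. eapply deriv_contpt. apply Dphi. }
    { split. assert (Hm := Rmin_l (phi w1) (phi v)). lra. assert (Hm := Rmax_r (phi w1) (phi v)). lra. }
    exists w; auto. }
  destruct (inv_fun phi dphi (fun _ => True) Dphi Pphi Sphi
     ltac:(intros; exists 1; split; [lra|auto])) as [psi [Hpsi Dpsi]].
  assert (Hyp : forall t, 0 <= t < b -> y t = psi (x t ^ 2 - / 2)).
  { intros t Ht. apply (sinj phi dphi Dphi Pphi). rewrite Hpsi by auto.
    destruct (A t ltac:(lra) ltac:(simpl; lra)) as [_ Hh]. fold H0 in Hh.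
    unfold H in Hh. unfold phi, al.
    assert (Hp := exp_pos (-2 * y t)).
    assert (E : exp (-2 * y t) * exp (2 * y t) = 1) by (rewrite <- exp_plus; replace (-2 * y t + 2 * y t) with 0 by ring; apply exp_0).
    rewrite <- Hh.
    replace (2 * (/ 2 * exp (-2 * y t) * (y t - x t ^ 2 + / 2)) * exp (2 * y t))
      with ((exp (-2 * y t) * exp (2 * y t)) * (y t - x t ^ 2 + / 2)) by field.
    rewrite E. ring. }
  set (k := fun w => w ^ 2 - psi (w ^ 2 - / 2)).
  assert (Hk' : forall w, k w = dphi (psi (w ^ 2 - / 2)) / 2).
  { intros w. unfold k, dphi. assert (Hq := Hpsi (w ^ 2 - / 2) I). unfold phi in Hq. lra. }
  assert (Hk : forall w, / 2 < k w).
  { intros w. rewrite Hk'. unfold dphi. assert (Hp := exp_pos (2 * psi (w ^ 2 - / 2))). nra. }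
  assert (Ck : forall w, continuity_pt k w).
  { intros w. unfold k. apply continuity_pt_minus.
    apply derivable_continuous_pt; apply derivable_pt_pow.
    apply (continuity_pt_comp (fun w => w ^ 2 - / 2) psi w).
    apply continuity_pt_minus. apply derivable_continuous_pt; apply derivable_pt_pow. apply continuity_pt_const. intros ? ?; auto.
    eapply deriv_contpt. apply Dpsi. exact I. }
  set (rk := fun w => / k w).
  assert (Crk : forall w, continuity_pt rk w).
  { intros w. unfold rk. apply (continuity_pt_inv k w (Ck w)). specialize (Hk w). lra. }
  assert (Prk : forall w, 0 < rk w).
  { intros w. unfold rk. apply Rinv_0_lt_compat. specialize (Hk w). lra. }
  set (tau := fun v => RInt rk (x 0) v).
  assert (Dtau : forall v, is_derive tau v (rk v)) by (intros; apply antider; auto).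
  assert (Htau0 : tau (x 0) = 0) by (unfold tau; rewrite RInt_point; reflexivity).
  assert (Htx : forall t, 0 <= t < b -> tau (x t) = t).
  { intros t Ht. replace t with (tau (x 0) + 1 * (t - 0)) at 2 by (rewrite Htau0; ring).
    apply (lin_f (fun s => tau (x s)) (fun _ => 1)). lra.
    intros u Hu. split; auto.
    eapply is_derive_eq. apply (is_derive_comp tau x). apply Dtau.
    apply (dx x y b Hsol); [lra| simpl; lra].
    destruct (F1v u ltac:(lra) ltac:(simpl; lra)) as [Hf _]. rewrite Hf.
    replace (x u ^ 2 - y u) with (k (x u)) by (unfold k; rewrite <- Hyp; auto; lra).
    unfold scal; simpl; unfold mult; simpl. unfold rk.
    apply Rinv_r. specialize (Hk (x u)). lra. }
  assert (HtauM : b <= tau M).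
  { apply Rnot_lt_le; intro Hlt.
    set (t := (Rmax 0 (tau M) + b) / 2).
    assert (H1 := Rmax_l 0 (tau M)). assert (H2 := Rmax_r 0 (tau M)).
    assert (Hmax0 : Rmax 0 (tau M) < b) by (apply Rmax_lub_lt; lra).
    assert (Ht : 0 <= t < b) by (unfold t; lra).
    assert (Htt : tau M < t) by (unfold t; lra).
    assert (tau (x t) <= tau M).
    { destruct (Req_dec (x t) M) as [->|]. lra. left. apply (smono tau rk Dtau Prk).
      assert (x t <= M) by (apply Hbound; auto). lra. }
    rewrite Htx in H by auto. lra. }
  set (B := tau (M + 1)).
  assert (HB : b < B) by (assert (tau M < tau (M+1)) by (apply (smono tau rk Dtau Prk); lra); unfold B; lra).
  assert (Hlow : tau (x 0 - 1) < 0).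
  { assert (tau (x 0 - 1) < tau (x 0)) by (apply (smono tau rk Dtau Prk); lra). lra. }
  assert (Hx0M : x 0 <= M) by (apply Hbound; lra).
  set (P := fun v => tau (x 0 - 1) < v < B).
  assert (Stau : forall v, P v -> exists w, tau w = v).
  { intros v [Hv1 Hv2]. destruct (IVT_gen tau (x 0 - 1) (M + 1) v) as [w [_ Hw]].
    { intros w. eapply deriv_contpt. apply Dtau. }
    { unfold B in Hv2. split. assert (Hm := Rmin_l (tau (x 0 - 1)) (tau (M + 1))). lra.
      assert (Hm := Rmax_r (tau (x 0 - 1)) (tau (M + 1))). lra. }
    exists w; auto. }
  assert (Otau : forall v, P v -> exists e, 0 < e /\ forall u, Rabs (u - v) < e -> P u).
  { intros v [Hv1 Hv2]. exists (Rmin (v - tau (x 0 - 1)) (B - v)). split.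
    apply Rmin_glb_lt; lra. intros u Hu. apply Rabs_def2 in Hu.
    assert (H1 := Rmin_l (v - tau (x 0 - 1)) (B - v)). assert (H2 := Rmin_r (v - tau (x 0 - 1)) (B - v)).
    split; lra. }
  destruct (inv_fun tau rk P Dtau Prk Stau Otau) as [g [Hg Dg]].
  assert (Hgx : forall t, 0 <= t < b -> g t = x t).
  { intros t Ht. apply (sinj tau rk Dtau Prk). rewrite Hg, Htx; auto. split; lra. }
  assert (Hyg : forall t, 0 <= t < b -> y t = psi (g t ^ 2 - / 2)).
  { intros t Ht. rewrite Hgx by auto. apply Hyp; auto. }
  set (X := fun t => if Rlt_dec t b then x t else g t).
  set (Y := fun t => if Rlt_dec t b then y t else psi (g t ^ 2 - / 2)).
  apply (Hmax (Finite B) X Y). simpl; lra.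
  2: { intros t Ht Htb. simpl in Htb. unfold X, Y. destruct (Rlt_dec t b); [split; auto|contradiction]. }
  intros t Ht HtB. simpl in HtB. destruct (Rlt_dec t b) as [Htb|Htb].
  - assert (LX : locally t (fun s => x s = X s)).
    { apply (loc_of t (b - t)). lra. intros s Hs. apply Rabs_def2 in Hs. unfold X.
      destruct (Rlt_dec s b); auto; lra. }
    assert (LY : locally t (fun s => y s = Y s)).
    { apply (loc_of t (b - t)). lra. intros s Hs. apply Rabs_def2 in Hs. unfold Y.
      destruct (Rlt_dec s b); auto; lra. }
    assert (EX : X t = x t) by (unfold X; destruct (Rlt_dec t b); tauto).
    assert (EY : Y t = y t) by (unfold Y; destruct (Rlt_dec t b); tauto).
    rewrite EX, EY. split.
    + eapply is_derive_ext_loc. exact LX. apply (dx x y b Hsol); auto.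
    + eapply is_derive_ext_loc. exact LY. apply (dy x y b Hsol); auto.
  - assert (Htb' : b <= t) by lra.
    assert (LX : locally t (fun s => g s = X s)).
    { apply (loc_of t t). lra. intros s Hs. apply Rabs_def2 in Hs. unfold X.
      destruct (Rlt_dec s b); auto. first [apply Hgx; lra | symmetry; apply Hgx; lra]. }
    assert (LY : locally t (fun s => psi (g s ^ 2 - / 2) = Y s)).
    { apply (loc_of t t). lra. intros s Hs. apply Rabs_def2 in Hs. unfold Y.
      destruct (Rlt_dec s b); auto. first [apply Hyg; lra | symmetry; apply Hyg; lra]. }
    assert (EX : X t = g t) by (unfold X; destruct (Rlt_dec t b); tauto).
    assert (EY : Y t = psi (g t ^ 2 - / 2)) by (unfold Y; destruct (Rlt_dec t b); tauto).
    assert (Pt : P t) by (unfold P; split; lra).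
    assert (Dgt : is_derive g t (k (g t))).
    { eapply is_derive_eq. apply Dg; auto. unfold rk. rewrite Rinv_inv. reflexivity. }
    rewrite EX, EY. split.
    + eapply is_derive_ext_loc. exact LX.
      rewrite F1_in. exact Dgt. specialize (Hk (g t)). unfold k in Hk. lra.
    + eapply is_derive_ext_loc. exact LY.
      eapply is_derive_eq. apply (is_derive_comp psi (fun s => g s ^ 2 - / 2)). apply Dpsi. exact I.
      apply (@is_derive_minus R_AbsRing R_NormedModule (fun s => g s ^ 2) (fun _ => / 2)).
      apply (is_derive_pow g 2). exact Dgt. apply is_derive_const.
      unfold scal, minus, plus, opp, zero, mult; simpl; unfold mult, plus, opp; simpl.
      rewrite (Hk' (g t)). replace (g t * (g t * 1)) with (g t ^ 2) by ring.
      assert (Hd0 := Pphi (psi (g t ^ 2 - / 2))).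
      set (d := dphi (psi (g t ^ 2 - / 2))) in *. field. lra.
Qed.

Theorem lemma4p6 :
  (* (i) *)
  (forall (c : R) (x y : R -> R), 0 < c ->
     is_sol x y p_infty -> x 0 = - c -> (x 0) ^ 2 < y 0 ->
     exists t1 t2 : R, 0 < t1 /\ t1 < t2 /\
       (forall t, 0 <= t <= t1 -> x t = - c /\ y t = y 0 - c * t) /\
       x t1 = - c /\ y t1 = c ^ 2 /\
       (forall t, t1 <= t <= t2 -> H (x t) (y t) = / 4 * exp (- 2 * c ^ 2)) /\
       x t2 = c /\ y t2 = c ^ 2 /\
       (forall t, t2 <= t -> x t = c /\ y t = c ^ 2 + c * (t - t2)) /\
       is_lim y p_infty p_infty) /\
  (* (ii) *)
  (forall (c : R) (x y : R -> R), 0 < c ->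
     is_sol x y p_infty -> x 0 = c -> (x 0) ^ 2 < y 0 ->
     (forall t, 0 <= t -> x t = c /\ y t = y 0 + c * t) /\
     is_lim y p_infty p_infty) /\
  (* (iii) *)
  (forall (T : Rbar) (x y : R -> R),
     Rbar_lt (Finite 0) T -> is_sol x y T -> H (x 0) (y 0) < 0 ->
     (forall t, 0 <= t -> Rbar_lt (Finite t) T ->
        ~ C02 (x t) (y t) /\ H (x t) (y t) = H (x 0) (y 0)) /\
     (maximal_sol x y T -> tends_to_pinfty_at x T)) /\
  (* (iv) *)
  (forall a b : R, (F1 a b = 0 /\ a = 0) <-> (a = 0 /\ 0 <= b)) /\
  (forall a b : R, a = 0 /\ 0 <= b -> C02 a b) /\
  (* (v) *)
  (is_sol_R (fun t => / 2 * t) (fun t => / 4 * t ^ 2 - / 2) /\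
   forall t : R, H (/ 2 * t) (/ 4 * t ^ 2 - / 2) = 0).
Proof.
  split; [exact part_i|].
  split.
  { intros c x y Hc Hsol Hx0 Hy0. rewrite Hx0 in Hy0.
    assert (Hr := L_right x y c 0 Hc Hsol ltac:(lra) Hx0 ltac:(lra)).
    split. intros t Ht. destruct (Hr t Ht) as [A B]. split; auto. rewrite B; ring.
    apply (lim_lin y (y 0) c 0); auto. intros t Ht; apply Hr; auto. }
  split.
  { intros T x y HT Hsol HH0. split. apply part_iii_a; auto. apply part_iii_b; auto. }
  split.
  { intros a b. unfold F1. split.
    - intros [Hf ->]. split; auto. destruct (Rlt_dec b (0 ^ 2)); [|simpl in n; lra].
      simpl in *. lra.
    - intros [-> Hb]. split; auto. destruct (Rlt_dec b (0 ^ 2)); auto. simpl in r; lra. }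
  split.
  { intros a b [-> Hb]. unfold C02. simpl. lra. }
  split.
  { intros t. rewrite F1_in by (simpl; nra). split.
    - eapply is_derive_eq. apply (is_derive_scal (fun t => t)). apply is_derive_id.
      unfold one; simpl. field.
    - eapply is_derive_eq.
      apply (@is_derive_minus R_AbsRing R_NormedModule (fun t => / 4 * t ^ 2) (fun _ => / 2)).
      apply (is_derive_scal (fun t => t ^ 2)). apply (is_derive_pow (fun t => t) 2). apply is_derive_id.
      apply is_derive_const.
      unfold scal, minus, plus, opp, zero, mult, one; simpl; unfold mult, plus, opp; simpl. field. }
  intros t. unfold H. field.
Qed.
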